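(* Let $0<c_1\le \frac{0.04}{d_{\max}}$ and suppose $t\le c_1 n$. Then for all sufficiently large $n$ and all $0\le k\le c_1 n$, \[ \frac{L}{n-d_{\max}}\cdot \exp\!\left(1-\frac{\sum_{i=1}^x d_i (a_i-t_i)}{n}\right)\le \frac{9}{10},\qquad\text{where } L=\sum_{i=1}^x (a_i-t_i)\, d_i\, e^{d_i k/n}. \]
   Context: Setting: $n$ vertices, a target set $B$ with $|B|=t$, each vertex $v$ has out-degree $d_v$ with $2\le d_{\min}\le d_v\le d_{\max}$ (constants). $d_1,\dots,d_x$ are the distinct out-degrees, $a_i$ is the number of vertices of out-degree $d_i$ (so $\sum_i a_i=n$), and $t_i$ the number of vertices of $B$ of out-degree $d_i$ (so $\sum_i t_i=t$). *)

(* Defs.v *)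
From mathcomp Require Import all_boot all_order all_algebra.
From mathcomp Require Import reals sequences exp.
Set Implicit Arguments. Unset Strict Implicit. Unset Printing Implicit Defensive.

(* Vertices are 'I_n; deg v is the out-degree of v; B is the target set. *)

(* The distinct out-degrees d_1, ..., d_x (as a duplicate-free list). *)
Definition degs (n : nat) (deg : 'I_n -> nat) : seq nat :=
  undup [seq deg v | v <- enum 'I_n].

Definition acount (n : nat) (deg : 'I_n -> nat) (d : nat) : nat :=
  #|[set v : 'I_n | deg v == d]|.

Definition tcount (n : nat) (deg : 'I_n -> nat) (B : {set 'I_n}) (d : nat) : nat :=
  #|[set v in B | deg v == d]|.

(* Main.v *)
Require Import Defs.
From mathcomp Require Import all_boot all_order all_algebra.
From mathcomp Require Import reals sequences exp.
From mathcomp Require Import ring lra.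
Import Order.TTheory GRing.Theory Num.Theory.
Local Open Scope ring_scope.

Lemma sum_split (R : realType) n (deg : 'I_n -> nat) (B : {set 'I_n}) (G : nat -> R) :
  \sum_(d <- degs deg) (acount deg d - tcount deg B d)%:R * G d
  = \sum_(v in ~:B) G (deg v).
Proof.
have h d : (acount deg d - tcount deg B d)%N = #|[set v in ~:B | deg v == d]|.
  rewrite /acount /tcount; set A := [set v | deg v == d].
  have -> : [set v in B | deg v == d] = A :&: B.
    by apply/setP => v; rewrite !inE andbC.
  have -> : [set v in ~:B | deg v == d] = A :\: B.
    by apply/setP => v; rewrite !inE andbC.
  rewrite -(cardsID B A). by rewrite addKn.
have h2 d : (acount deg d - tcount deg B d)%:R * G d
            = \sum_(v in ~:B) (deg v == d)%:R * G d.
  rewrite h mulr_natl -sumr_const.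
  rewrite [RHS](eq_bigr (fun v => if deg v == d then G d else 0)); last first.
    by move=> v _; case: (deg v == d) => /=; rewrite ?mul1r ?mul0r.
  rewrite -big_mkcondr; apply: eq_bigl => v; by rewrite !inE.
under eq_bigr do rewrite h2.
rewrite exchange_big /=; apply: eq_bigr => v _.
have hv : deg v \in degs deg by rewrite mem_undup; apply: map_f; rewrite mem_enum.
rewrite (bigD1_seq (deg v)) //= ?undup_uniq // eqxx mul1r big1 ?addr0 //.
by move=> d; rewrite eq_sym => /negbTE ->; rewrite mul0r.
Qed.
Lemma keyx (R : realType) (x : R) : 196/100 <= x -> x * expR (104/100 - x) <= 891/1000.
Proof.
move=> hx.
have e1 : 123/100 <= expR (23/100 : R) by have := expR_ge1Dx (23/100 : R); lra.
have e4 : expR (92/100 : R) = expR (23/100) ^+ 4.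
  by rewrite -expRM_natl; congr expR; rewrite -[4%:R]/(4 : R); lra.
set e := expR (23/100 : R) in e1 e4.
have e4' : 2288/1000 <= e ^+ 4.
  have h2 : 15129/10000 <= e ^+ 2 by rewrite expr2; nra.
  have : e ^+ 4 = e ^+ 2 * e ^+ 2 by rewrite -exprD.
  move=> ->; nra.
have ey : expR (x - 104/100) = expR (92/100) * expR (x - 196/100).
  by rewrite -expRD; congr expR; lra.
have ey2 : 1 + (x - 196/100) <= expR (x - 196/100) by apply: expR_ge1Dx.
have hE : x <= 891/1000 * expR (x - 104/100).
  rewrite ey e4.
  have hp : 0 <= expR (x - 196/100) by apply/ltW/expR_gt0.
  nra.
have inv : expR (104/100 - x) * expR (x - 104/100) = 1.
  by rewrite -expRD -expR0; congr expR; lra.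
have p := expR_gt0 (104/100 - x).
nra.
Qed.

Lemma real_part (R : realType) (n dm L S a : R) : 100*dm <= n -> 0 < dm -> 0 <= L ->
  L <= expR a * S -> a <= 4/100 -> 196/100*n <= S ->
  L/(n-dm) * expR(1 - S/n) <= 9/10.
Proof.
move=> hn hdm hL hLS ha hS.
have n0 : 0 < n by lra.
have nd : 0 < n - dm by lra.
have Sx : S = (S / n) * n by rewrite mulfVK // gt_eqF.
set x := S / n in Sx *.
have hx : 196/100 <= x by rewrite /x ler_pdivlMr //; lra.
rewrite mulrAC ler_pdivrMr //.
have k := @keyx R x hx.
have E1 : L * expR (1 - x) <= expR a * S * expR (1 - x).
  by rewrite ler_wpM2r // ltW // expR_gt0.
have E2 : expR a * S * expR (1 - x) = S * expR (1 + a - x).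
  by rewrite [expR a * S]mulrC -mulrA -expRD; congr (_ * expR _); lra.
have E3 : expR (1 + a - x) <= expR (104/100 - x) by rewrite ler_expR; lra.
have S0 : 0 <= S by lra.
have E4 : S * expR (1 + a - x) <= S * expR (104/100 - x) by rewrite ler_wpM2l.
have E5 : S * expR (104/100 - x) = n * (x * expR (104/100 - x)).
  by rewrite {1}Sx; ring.
have E6 : n * (x * expR (104/100 - x)) <= n * (891/1000) by rewrite ler_wpM2l // ltW.
lra.
Qed.

Theorem lemma6 (R : realType) (dmin dmax : nat) (c1 : R) :
  (2 <= dmin)%N -> (dmin <= dmax)%N ->
  0 < c1 -> c1 <= (4 / 100) / dmax%:R ->
  exists N : nat, forall n : nat, (N <= n)%N ->
  forall (deg : 'I_n -> nat) (B : {set 'I_n}),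
    (forall v, (dmin <= deg v)%N && (deg v <= dmax)%N) ->
    (#|B|%:R <= c1 * n%:R) ->
    forall k : nat, k%:R <= c1 * n%:R ->
    let L : R := \sum_(d <- degs deg)
               (acount deg d - tcount deg B d)%:R * d%:R
                 * expR (d%:R * k%:R / n%:R) in
    L / (n%:R - dmax%:R)
      * expR (1 - (\sum_(d <- degs deg)
                      d%:R * (acount deg d - tcount deg B d)%:R) / n%:R)
    <= 9 / 10.
Proof.
move=> h2 hmm c10 hc1.
have dm2 : (2 <= dmax)%N by apply: leq_trans hmm.
have dmR : (2 : R) <= dmax%:R by rewrite (ler_nat R 2 dmax).
have dmin2 : (2 : R) <= dmin%:R by rewrite (ler_nat R 2 dmin).
have cd : c1 * dmax%:R <= 4/100 by rewrite -ler_pdivlMr //; lra.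
exists (100 * dmax)%N => n hn deg B hdeg hB k hk; cbv zeta.
have hnR : 100 * dmax%:R <= n%:R :> R.
  by rewrite -[100 : R]/(100%:R) -natrM ler_nat.
have n0 : (0 : R) < n%:R by lra.

under eq_bigr do rewrite -mulrA.
under [X in expR (1 - X / _)]eq_bigr do rewrite mulrC.
rewrite (@sum_split R n deg B (fun d : nat => d%:R * expR (d%:R * k%:R / n%:R))).
rewrite (@sum_split R n deg B (fun d : nat => (d%:R : R))).
apply: (@real_part R n%:R dmax%:R _ _ (dmax%:R * k%:R / n%:R)) => //.
- lra.
- by apply: sumr_ge0 => v _; rewrite mulr_ge0 // ltW // expR_gt0.
- rewrite mulr_sumr; apply: ler_sum => v _.
  rewrite mulrC ler_wpM2r // ler_expR -!mulrA ler_wpM2r ?divr_ge0 //.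
  by rewrite ler_nat; case/andP: (hdeg v).
- have : k%:R / n%:R <= c1 by rewrite ler_pdivrMr.
  have : 0 <= k%:R / n%:R :> R by rewrite divr_ge0.
  rewrite -mulrA; nra.
- have hS : \sum_(v in ~: B) (2 : R) <= \sum_(v in ~: B) (deg v)%:R.
    apply: ler_sum => v _; case/andP: (hdeg v) => h1 _.
    apply: le_trans dmin2 _; by rewrite ler_nat.
  rewrite sumr_const in hS.
  have hc : (#|~: B| + #|B|)%N = n.
    by rewrite addnC cardsC card_ord.
  have hc' : (#|~: B|%:R : R) = n%:R - #|B|%:R.
    by apply/eqP; rewrite eq_sym subr_eq -natrD hc.
  have hS2 : 2 * (n%:R - #|B|%:R) <= \sum_(v in ~: B) (deg v)%:R :> R.
    apply: le_trans hS; rewrite -mulr_natl -hc' mulrC.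
    by rewrite -[X in _ <= X]mulr_natr mulrC.
  have hb : #|B|%:R <= 2/100 * n%:R :> R.
    apply: le_trans hB _; apply: ler_wpM2r; first lra.
    nra.
  nra.
Qed.
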